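(* Let $X$ be a topological space with a regular $G_\delta$-diagonal and let $E$ be a $B_1$-retract of $X$. Then $E$ is a $G_\delta$-set in $X$.
   Context: A function $f:X\to Y$ between topological spaces is a Baire-one function if it is the pointwise limit of a sequence of continuous functions $f_n:X\to Y$. A subset $E$ of $X$ (with the subspace topology) is a $B_1$-retract of $X$ if there exists a Baire-one function $r:X\to E$ with $r(x)=x$ for all $x\in E$. A subset $A$ of a topological space $Z$ is a regular $G_\delta$-set if there is a sequence $(G_n)_{n\ge1}$ of open sets in $Z$ with $A=\bigcap_n G_n=\bigcap_n \overline{G_n}$. $X$ has a regular $G_\delta$-diagonal if $\Delta=\{(x,x):x\in X\}$ is a regular $G_\delta$-set in $X\times X$. *)

(* Defs.v *)
Set Implicit Arguments.

Definition is_topology (T : Type) (op : (T -> Prop) -> Prop) : Prop :=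
  op (fun _ => True) /\
  (forall U V, op U -> op V -> op (fun x => U x /\ V x)) /\
  (forall F : (T -> Prop) -> Prop, (forall U, F U -> op U) ->
     op (fun x => exists U, F U /\ U x)).

Definition prod_open (X Y : Type) (opX : (X -> Prop) -> Prop)
  (opY : (Y -> Prop) -> Prop) (W : X * Y -> Prop) : Prop :=
  forall p, W p -> exists U V, opX U /\ opY V /\ U (fst p) /\ V (snd p) /\
    (forall q, U (fst q) -> V (snd q) -> W q).

Definition sub_open (X : Type) (opX : (X -> Prop) -> Prop) (E : X -> Prop)
  (W : {x : X | E x} -> Prop) : Prop :=
  exists U, opX U /\ forall y, W y <-> U (proj1_sig y).

Definition closure (T : Type) (op : (T -> Prop) -> Prop) (A : T -> Prop)
  (x : T) : Prop :=
  forall U, op U -> U x -> exists y, U y /\ A y.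

Definition continuous (X Y : Type) (opX : (X -> Prop) -> Prop)
  (opY : (Y -> Prop) -> Prop) (f : X -> Y) : Prop :=
  forall V, opY V -> opX (fun x => V (f x)).

Definition converges (Y : Type) (opY : (Y -> Prop) -> Prop) (u : nat -> Y)
  (y : Y) : Prop :=
  forall V, opY V -> V y -> exists N, forall n, N <= n -> V (u n).

Definition baire_one (X Y : Type) (opX : (X -> Prop) -> Prop)
  (opY : (Y -> Prop) -> Prop) (f : X -> Y) : Prop :=
  exists fn : nat -> X -> Y, (forall n, continuous opX opY (fn n)) /\
    forall x, converges opY (fun n => fn n x) (f x).

Definition B1_retract (X : Type) (opX : (X -> Prop) -> Prop) (E : X -> Prop)
  : Prop :=
  exists r : X -> {x : X | E x}, baire_one opX (sub_open opX E) r /\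
    forall x (Hx : E x), proj1_sig (r x) = x.

Definition G_delta (T : Type) (op : (T -> Prop) -> Prop) (A : T -> Prop)
  : Prop :=
  exists G : nat -> T -> Prop, (forall n, op (G n)) /\
    forall x, A x <-> (forall n, G n x).

Definition regular_G_delta (T : Type) (op : (T -> Prop) -> Prop)
  (A : T -> Prop) : Prop :=
  exists G : nat -> T -> Prop, (forall n, op (G n)) /\
    (forall x, A x <-> (forall n, G n x)) /\
    (forall x, A x <-> (forall n, closure op (G n) x)).

Definition diagonal (X : Type) (p : X * X) : Prop := fst p = snd p.

Definition regular_G_delta_diagonal (X : Type) (opX : (X -> Prop) -> Prop)
  : Prop :=
  regular_G_delta (prod_open opX opX) (@diagonal X).

(* Main.v *)
Require Import Defs.
From Stdlib Require Import Arith Lia Cantor.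

Theorem proposition2p2 (X : Type) (opX : (X -> Prop) -> Prop)
  (HX : is_topology opX) (E : X -> Prop) :
  regular_G_delta_diagonal opX -> B1_retract opX E -> G_delta opX E.
Proof.
  intros [G [HGo [HG1 HG2]]] [r [[fn [Hfc Hconv]] Hr]].
  destruct HX as [HT [HI HU]].
  set (W := fun n m x => exists O, (opX O /\ forall z, O z -> exists k,
              m <= k /\ G n (z, proj1_sig (fn k z))) /\ O x).
  assert (HWo : forall n m, opX (W n m)).
  { intros n m. apply HU. intros U [HUo _]. exact HUo. }
  assert (HEW : forall x, E x -> forall n m, W n m x).
  { intros x Ex n m.
    destruct (HGo n (x, x)) as [U [V [HUo [HVo [HUx [HVx Hsub]]]]]].
    { apply HG1. reflexivity. }
    simpl in *.
    assert (Hso : sub_open opX E (fun y => V (proj1_sig y))).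
    { exists V; split; [exact HVo| tauto]. }
    destruct (Hconv x _ Hso) as [N HN].
    { simpl. rewrite (Hr x Ex). exact HVx. }
    set (k := max m N).
    exists (fun z => U z /\ V (proj1_sig (fn k z))). split; [split|].
    - apply HI; [exact HUo|]. exact (Hfc k _ Hso).
    - intros z [Hz1 Hz2]. exists k. split; [lia|]. apply Hsub; simpl; assumption.
    - split; [exact HUx|]. apply HN. lia. }
  exists (fun N => W (fst (of_nat N)) (snd (of_nat N))). split.
  { intros N. apply HWo. }
  intros x. split.
  { intros Ex N. apply HEW; exact Ex. }
  intros HA.
  assert (HA' : forall n m, W n m x).
  { intros n m. specialize (HA (to_nat (n, m))). rewrite cancel_of_to in HA. exact HA. }
  set (y := proj1_sig (r x)).
  assert (Hxy : diagonal (x, y)).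
  { apply HG2. intros n Wp HWp Hin.
    destruct (HWp (x, y) Hin) as [U [V [HUo [HVo [HUx [HVy Hsub]]]]]].
    simpl in *.
    assert (Hso : sub_open opX E (fun y => V (proj1_sig y))).
    { exists V; split; [exact HVo| tauto]. }
    destruct (Hconv x _ Hso HVy) as [N HN].
    destruct (HA' n N) as [O [[_ HO] HOx]].
    destruct (HO x HOx) as [k [Hk HGk]].
    exists (x, proj1_sig (fn k x)). split; [|exact HGk].
    apply Hsub; simpl; [exact HUx| apply HN; exact Hk]. }
  unfold diagonal in Hxy; simpl in Hxy. rewrite Hxy. unfold y.
  exact (proj2_sig (r x)).
Qed.
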